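(* Let $v=[q;w_1,\ldots,w_n]$ be a WVG and $i\neq j$ players with $w_j\ge w_i$. Then $\beta_{\&\{i,j\}}(v_{\&\{i,j\}})\ge\beta_i(v)$; i.e. annexing a player of at least equal weight can never decrease the annexer's Banzhaf index.
   Context: A weighted voting game (WVG) $v=[q;w_1,\ldots,w_n]$ has player set $N=\{1,\ldots,n\}$, nonnegative weights $w_j$ and quota $q$ with $0<q\le \sum_j w_j$; a coalition $S\subseteq N$ is winning iff $\sum_{j\in S}w_j\ge q$. Player $j$ is critical in $S$ if $S$ is winning and $S\setminus\{j\}$ is losing; $\eta_j(v)$ is the number of coalitions in which $j$ is critical; $\beta_j(v)=\eta_j(v)/\sum_k\eta_k(v)$. The merged game $v_{\&T}$ has the same quota, players outside $T$ keep their weights, and the players of $T$ are replaced by one player $\&T$ of weight $\sum_{j\in T}w_j$. *)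

(* Defs.v *)
From HB Require Import structures.
From mathcomp Require Import all_boot all_order all_algebra.
Set Implicit Arguments. Unset Strict Implicit. Unset Printing Implicit Defensive.
Import Order.TTheory GRing.Theory Num.Theory.
Local Open Scope ring_scope.

Section WVG.
Variables (R : realFieldType) (P : finType).

Definition winning (q : R) (w : P -> R) (S : {set P}) : bool :=
  q <= \sum_(k in S) w k.

Definition critical (q : R) (w : P -> R) (j : P) (S : {set P}) : bool :=
  winning q w S && ~~ winning q w (S :\ j).

Definition eta (q : R) (w : P -> R) (j : P) : nat :=
  #|[set S : {set P} | critical q w j S]|.

Definition banzhaf (q : R) (w : P -> R) (j : P) : R :=
  (eta q w j)%:R / (\sum_(k : P) eta q w k)%:R.

(* Players of the merged game v_{&{i,j}}: the players outside {i,j}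
   (Some k) plus one new player &{i,j} (None). *)
Definition merged_players (i j : P) : finType :=
  option {k : P | k \notin [set i; j]}.

Definition merged_weight (w : P -> R) (i j : P) (x : merged_players i j) : R :=
  match x with
  | None => w i + w j
  | Some k => w (val k)
  end.

End WVG.

(* Main.v *)
Require Import Defs.
From HB Require Import structures.
From mathcomp Require Import all_boot all_order all_algebra.
From Stdlib Require Import Lia Psatz.
Import Order.TTheory GRing.Theory Num.Theory.
Local Open Scope ring_scope.

Lemma arith_helper (E E' T T' : nat) :
  (E <= E')%N -> (T' + E <= E' + T)%N -> (E <= T)%N -> (E * T' <= E' * T)%N.
Proof.
move=> /ssrnat.leP h1 /ssrnat.leP h2 /ssrnat.leP h3; apply/ssrnat.leP.
rewrite -!multE. rewrite -!plusE in h2. nia.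
Qed.

Section Merge.
Variables (R : realFieldType) (P : finType) (i j : P).
Hypothesis hij : i != j.

Definition iota (k : P) : merged_players i j := insub k.

Lemma iotaP (x : merged_players i j) k :
  (iota k == x) = (match x with None => k \in [set i; j] | Some s => k == val s end).
Proof.
rewrite /iota; case: insubP => [s Hk vs | Hk]; case: x => [t|] /=.
- by rewrite -vs; apply/eqP/eqP => [[->]|/val_inj ->].
- by rewrite (negbTE Hk).
- apply/esym/negbTE/eqP => e; have := valP t; rewrite /= -e; by rewrite negbK in Hk; rewrite Hk.
- by rewrite negbK in Hk; rewrite Hk.
Qed.

Lemma iota_val s : iota (val s) = Some s.
Proof. by apply/eqP; rewrite iotaP. Qed.

Lemma iota_i : iota i = None.
Proof. by apply/eqP; rewrite iotaP !inE eqxx. Qed.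

Lemma fiber (T : Type) (idx : T) (op : Monoid.com_law idx) F x :
  \big[op/idx]_(k | iota k == x) F k =
  match x with None => op (F i) (F j) | Some s => F (val s) end.
Proof.
under eq_bigl do rewrite iotaP.
case: x => [s|] /=; first by rewrite big_pred1_eq.
rewrite big_setU1 ?inE // big_set1 //.
Qed.

Definition phi (S : {set merged_players i j}) : {set P} := iota @^-1: S.

Lemma phi_inj : injective phi.
Proof.
move=> S1 S2 H; apply/setP => x.
have [k <-] : exists k, iota k = x.
  by case: x => [s|]; [exists (val s); exact: iota_val | exists i; exact: iota_i].
by have := congr1 (fun A : {set P} => k \in A) H; rewrite /phi !inE.
Qed.

Lemma sum_phi (w : P -> R) (S : {set merged_players i j}) :
  \sum_(k in phi S) w k = \sum_(x in S) merged_weight w x.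
Proof.
rewrite (partition_big iota (mem S)); last by move=> k; rewrite /phi inE.
apply: eq_bigr => x xS.
rewrite (eq_bigl (fun k => iota k == x)); last first.
  by move=> k; rewrite /phi inE; case: eqP => [->|_]; [rewrite andbT; exact: xS | rewrite andbF].
by rewrite fiber; case: x {xS}.
Qed.

Lemma win_phi q (w : P -> R) S :
  winning q (merged_weight w (i:=i) (j:=j)) S = winning q w (phi S).
Proof. by rewrite /winning sum_phi. Qed.

Lemma wmono (w : P -> R) (A B : {set P}) :
  (forall k, 0 <= w k) -> A \subset B -> \sum_(k in A) w k <= \sum_(k in B) w k.
Proof.
move=> w0 AB; rewrite (@big_setID _ _ _ _ B A) /= (setIidPr AB) lerDl.
by apply: sumr_ge0 => k _.
Qed.

Lemma eta_some q (w : P -> R) s :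
  (Defs.eta q (merged_weight w (i:=i) (j:=j)) (Some s) <= Defs.eta q w (val s))%N.
Proof.
rewrite /Defs.eta -(card_imset _ phi_inj); apply: subset_leq_card.
apply/subsetP => T /imsetP [S]; rewrite !inE /critical => /andP [h1 h2] ->.
rewrite -win_phi h1 /=.
have -> : phi S :\ val s = phi (S :\ Some s).
  apply/setP => k; rewrite /phi !inE -(iotaP (Some s)) //.
by rewrite -win_phi.
Qed.

Definition gmap (T : {set P}) : {set merged_players i j} :=
  [set x | if x is Some s then val s \in T else true].

Lemma phi_g T : phi (gmap T) = T :|: [set i; j].
Proof.
apply/setP => k; rewrite /phi /gmap !inE /iota.
case: insubP => [s Hk vs|Hk] /=.
- have e : sval s = k by exact: vs.
  by rewrite e; rewrite !inE in Hk; case/norP: Hk => /negbTE -> /negbTE ->; rewrite !orbF.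
- by move: Hk => /negPn; rewrite !inE => /orP [] ->; rewrite ?orbT.
Qed.

Lemma phi_gD T : phi (gmap T :\ None) = T :\: [set i; j].
Proof.
apply/setP => k; rewrite /phi /gmap !inE /iota.
case: insubP => [s Hk vs|Hk] /=.
- have e : sval s = k by exact: vs.
  by rewrite e; rewrite !inE in Hk; rewrite Hk.
- by move: Hk => /negPn; rewrite !inE => ->.
Qed.

Lemma crit_in q (w : P -> R) k T : critical q w k T -> k \in T.
Proof.
case/andP => h1; apply: contraR => kT.
have -> : T :\ k = T by apply/setP => x; rewrite !inE; case: eqP => // ->; rewrite (negbTE kT).
by rewrite h1.
Qed.

Arguments crit_in {q w k T}.

Lemma eta_none q (w : P -> R) :
  (forall k, 0 <= w k) -> w i <= w j ->
  (Defs.eta q w i <= Defs.eta q (merged_weight w (i:=i) (j:=j)) None)%N.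
Proof.
move=> w0 wij.
have key : forall T, critical q w i T ->
    (j \in T) = (\sum_(k in T :\: [set i; j]) w k + w j < q).
  move=> T cT; have iT := crit_in cT; case/andP: cT; rewrite /winning -ltNge => h1 h2.
  have jn : j != i by rewrite eq_sym.
  case jT: (j \in T).
  - have e : T :\ i = (T :\: [set i; j]) :|: [set j].
      by apply/setP => k; rewrite !inE; case: (eqVneq k j) => [->|_]; rewrite ?jT ?jn ?orbT ?orbF ?andbT.
    move: h2; rewrite e setUC big_setU1 /=; last by rewrite !inE eqxx orbT.
    by rewrite addrC => ->.
  - have e : T :\ i = T :\: [set i; j].
      by apply/setP => k; rewrite !inE; case: (eqVneq k j) => [->|_] /=; rewrite ?jT ?orbT ?orbF ?andbF.
    rewrite -e; apply/esym/negbTE; rewrite -leNgt.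
    apply: le_trans h1 _; rewrite (big_setD1 i iT) /= addrC lerD2l //.
have -> : Defs.eta q w i = #|gmap @: [set T | critical q w i T]|.
  rewrite card_in_imset // => T1 T2; rewrite !inE => c1 c2 e.
  have U : T1 :\: [set i; j] = T2 :\: [set i; j] by rewrite -!phi_gD e.
  apply/setP => k; case: (eqVneq k i) => [->|ki]; first by rewrite (crit_in c1) (crit_in c2).
  case: (eqVneq k j) => [->|kj]; first by rewrite (key _ c1) (key _ c2) U.
  have := congr1 (fun A : {set P} => k \in A) U; by rewrite /= !inE (negbTE ki) (negbTE kj).
apply: subset_leq_card; apply/subsetP => S /imsetP [T]; rewrite !inE => cT ->.
have iT := crit_in cT; case/andP: cT; rewrite /critical /winning => h1 h2.
rewrite -/(winning _ _ _) win_phi phi_g /winning.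
rewrite (le_trans h1) ?wmono //; last by apply/subsetP => k; rewrite !inE => ->.
rewrite -/(winning _ _ _) win_phi phi_gD /winning /=.
apply: contra h2 => h; apply: le_trans h _; apply: wmono => //.
by apply/subsetP => k; rewrite !inE => /andP [/norP [-> _] ->].
Qed.

End Merge.

Theorem mainTheorem13 (R : realFieldType) (P : finType) (q : R) (w : P -> R)
    (i j : P) :
  (forall k, 0 <= w k) ->
  0 < q -> q <= \sum_(k : P) w k ->
  i != j -> w i <= w j ->
  banzhaf q (@merged_weight R P w i j) (None : @merged_players P i j)
    >= banzhaf q w i.
Proof.
move=> w0 q0 qS hij wij.
set w' := merged_weight w (i:=i) (j:=j).
set E := Defs.eta q w i; set E' := Defs.eta q w' None.
set T := (\sum_(k : P) Defs.eta q w k)%N; set T' := (\sum_(x : merged_players i j) Defs.eta q w' x)%N.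
have h1 : (E <= E')%N by apply: eta_none.
have hT : T = (Defs.eta q w i + Defs.eta q w j + \sum_(k | @iota _ i j k != None) Defs.eta q w k)%N.
  rewrite /T (bigID (fun k => @iota _ i j k == None)) /=.
  by rewrite (@fiber _ _ _ hij).
have hT' : (T' <= E' + \sum_(k | @iota _ i j k != None) Defs.eta q w k)%N.
  rewrite /T' (bigD1 None) //= leq_add2l.
  rewrite (partition_big (@iota _ i j) (fun x => x != None)) //=.
  apply: leq_sum => x xN.
  rewrite (eq_bigl (fun k => @iota _ i j k == x)); last first.
    by move=> k; case: (eqVneq (@iota _ i j k) x) => [->|_]; rewrite ?andbF // andbT; exact: xN.
  rewrite (@fiber _ _ _ hij); case: x xN => // s _; exact: eta_some.
have h2 : (T' + E <= E' + T)%N.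
  rewrite hT; move: hT'; set C := (\sum_(k | _) _)%N; set D := Defs.eta q w j.
  move=> /ssrnat.leP H; apply/ssrnat.leP; rewrite -!plusE in H *; lia.
have h3 : (E <= T)%N by rewrite hT /E -addnA leq_addr.
rewrite /banzhaf -/E -/E' -/T -/T'.
have [E0|Epos] := posnP E.
  by rewrite E0 mul0r divr_ge0.
have T'pos : (0 < T')%N.
  have h : (E' <= T')%N by rewrite /T' (bigD1 None) //= leq_addr.
  exact: leq_trans (leq_trans Epos h1) h.
have Tpos : (0 < T)%N by apply: leq_trans Epos h3.
rewrite ler_pdivlMr ?ltr0n // mulrAC ler_pdivrMr ?ltr0n //.
rewrite -!natrM ler_nat; exact: arith_helper.
Qed.
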